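(* Let $(\mathcal{B}_n)_{n\in\mathbb{N}}$ be a countable inverse system of complete topological rings with continuous surjective transition homomorphisms $p_{m,n}\colon\mathcal{B}_m\to\mathcal{B}_n$ for $m\ge n\ge0$, let $\mathcal{B}=\varprojlim_n\mathcal{B}_n$ with the inverse limit topology and let $p_n\colon\mathcal{B}\to\mathcal{B}_n$ be the canonical projections. Let $\mathrm{e}_n\colon\mathcal{B}_n\to\mathcal{B}_n\{T\}$, $n\in\mathbb{N}$, be restricted exponential homomorphisms such that $\mathrm{e}_n\circ p_{m,n}=(p_{m,n}\widehat{\otimes}\mathrm{id}_{\mathbb{Z}[T]})\circ\mathrm{e}_m$ for all $m\ge n\ge0$. Then there exists a unique restricted exponential homomorphism $\underline{\mathrm{e}}=\varprojlim_n\mathrm{e}_n\colon\mathcal{B}\to\mathcal{B}\{T\}$ such that $\mathrm{e}_n\circ p_n=(p_n\widehat{\otimes}\mathrm{id}_{\mathbb{Z}[T]})\circ\underline{\mathrm{e}}$ for every $n\in\mathbb{N}$.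
   Context: Conventions: topological rings are linearly topologized with a countable fundamental system of open ideals; homomorphisms are continuous; complete means the canonical map to $\varprojlim_{\mathfrak{a}}\mathcal{B}/\mathfrak{a}$ (open ideals, discrete quotients) is a topological isomorphism. For complete $\mathcal{C}$, $\mathcal{C}\{T\}$, $\mathcal{C}\{T,T'\}$ denote restricted power series (coefficients converging to $0$), topologized by the ideals of series with all coefficients in a given open ideal. For a continuous ring homomorphism $p\colon\mathcal{C}\to\mathcal{C}'$, $p\widehat{\otimes}\mathrm{id}_{\mathbb{Z}[T]}\colon\mathcal{C}\{T\}\to\mathcal{C}'\{T\}$ is $\sum c_iT^i\mapsto\sum p(c_i)T^i$. A restricted exponential homomorphism of a complete ring $\mathcal{C}$ is a continuous ring homomorphism $\mathrm{e}\colon\mathcal{C}\to\mathcal{C}\{T\}$, $\mathrm{e}(c)=\sum_i\mathrm{e}_i(c)T^i$, with $\mathrm{e}_0=\mathrm{id}$ and $\sum_{i,j}\mathrm{e}_j(\mathrm{e}_i(c))T'^jT^i=\sum_\ell\mathrm{e}_\ell(c)(T+T')^\ell$ for all $c$. *)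

(* Defs.v *)
From mathcomp Require Import all_boot all_order all_algebra.
Set Implicit Arguments. Unset Strict Implicit. Unset Printing Implicit Defensive.
Import GRing.Theory.
Local Open Scope ring_scope.

Definition is_ideal (R : comPzRingType) (I : R -> Prop) : Prop :=
  I 0 /\ (forall x y, I x -> I y -> I (x - y)) /\ (forall r x, I x -> I (r * x)).

(* A linear topology with a countable fundamental system of open ideals,
   presented by a decreasing sequence of ideals (lt_basis k)_k forming a
   fundamental system of neighbourhoods of 0. *)
Record lintop (R : comPzRingType) := LinTop {
  lt_basis : nat -> R -> Prop;
  lt_ideal : forall k, is_ideal (lt_basis k);
  lt_decr  : forall k x, lt_basis k.+1 x -> lt_basis k x }.

Definition open_ideal (R : comPzRingType) (t : lintop R) (a : R -> Prop) : Prop :=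
  is_ideal a /\ exists k, forall x, lt_basis t k x -> a x.

Definition is_rhom (R S : comPzRingType) (f : R -> S) : Prop :=
  (forall x y, f (x - y) = f x - f y) /\ (forall x y, f (x * y) = f x * f y)
  /\ f 1 = 1.

Definition lt_continuous (R S : comPzRingType) (tR : lintop R) (tS : lintop S)
  (f : R -> S) : Prop :=
  forall k, exists l, forall x, lt_basis tR l x -> lt_basis tS k (f x).

(* Completeness: the canonical map R -> lim_{a open} R/a is bijective
   (it is then automatically a topological isomorphism).  An element of
   lim_a R/a is represented by a family of representatives c a (for a open)
   with c a = c b mod b whenever a is contained in b. *)
Definition compatible_family (R : comPzRingType) (t : lintop R)
  (c : (R -> Prop) -> R) : Prop :=
  forall a b, open_ideal t a -> open_ideal t b -> (forall x, a x -> b x) ->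
    b (c a - c b).

Definition lt_complete (R : comPzRingType) (t : lintop R) : Prop :=
  (forall x y, (forall a, open_ideal t a -> a (x - y)) -> x = y) /\
  (forall c, compatible_family t c ->
     exists x, forall a, open_ideal t a -> a (x - c a)).

(* A map e : C -> C{T} is given by its coefficient functions:
   e c = \sum_i (e c i) T^i.  The restricted power series ring C{T} consists
   of coefficient sequences tending to 0; it is topologized by the ideals of
   series with all coefficients in a given open ideal. *)
Definition ps_mul (C : comPzRingType) (f g : nat -> C) : nat -> C :=
  fun i => \sum_(j < i.+1) f j * g (i - j)%N.

(* Coefficient of T^i T'^j in (T + T')^l. *)
Definition binom2_coeff (C : comPzRingType) (l i j : nat) : C :=
  if l == (i + j)%N then ('C(l, i))%:R else 0.

Definition restricted_exp (C : comPzRingType) (t : lintop C)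
  (e : C -> nat -> C) : Prop :=
  (* e c lies in C{T}: coefficients tend to 0 *)
  (forall c k, exists N, forall i, (N <= i)%N -> lt_basis t k (e c i)) /\
  (* e is a ring homomorphism C -> C{T} *)
  (forall c d i, e (c - d) i = e c i - e d i) /\
  (forall c d i, e (c * d) i = ps_mul (e c) (e d) i) /\
  (forall i, e 1 i = (i == 0%N)%:R) /\
  (* e is continuous for the topology of C{T} *)
  (forall k, exists l, forall c, lt_basis t l c -> forall i, lt_basis t k (e c i)) /\
  (forall c, e c 0%N = c) /\
  (* \sum_{i,j} e_j(e_i(c)) T'^j T^i = \sum_l e_l(c) (T + T')^l,
     compared coefficientwise (only l <= i + j contribute to T^i T'^j). *)
  (forall c i j, e (e c i) j = \sum_(l < (i + j).+1) e c l * binom2_coeff C l i j).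

(* Main.v *)
Require Import Defs.
From mathcomp Require Import all_boot all_order all_algebra.
From Stdlib Require Import IndefiniteDescription FunctionalExtensionality.
Set Implicit Arguments. Unset Strict Implicit.
Import GRing.Theory.
Local Open Scope ring_scope.

Section Helpers.
Variables (R S : comPzRingType) (f : R -> S).
Hypothesis (Hf : is_rhom f).

Lemma rh0 : f 0 = 0.
Proof. case: Hf => H _; by have := H 0 0; rewrite !subrr. Qed.

Lemma rhN x : f (- x) = - f x.
Proof. case: Hf => H _; by have := H 0 x; rewrite !sub0r rh0 sub0r. Qed.

Lemma rhD x y : f (x + y) = f x + f y.
Proof. case: Hf => H _; by have := H x (- y); rewrite opprK rhN opprK. Qed.

Lemma rhB x y : f (x - y) = f x - f y.
Proof. by case: Hf. Qed.

Lemma rhM x y : f (x * y) = f x * f y.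
Proof. by case: Hf => _ []. Qed.

Lemma rh1 : f 1 = 1.
Proof. by case: Hf => _ []. Qed.

Lemma rhnat k : f k%:R = k%:R.
Proof. elim: k => [|k IH]; first by rewrite rh0. by rewrite -addn1 !natrD rhD IH rh1. Qed.

Lemma rhsum n (F : 'I_n -> R) : f (\sum_(j < n) F j) = \sum_(j < n) f (F j).
Proof. exact: (big_morph f rhD rh0). Qed.
End Helpers.

Lemma lt_mono (R : comPzRingType) (t : lintop R) k l x :
  (k <= l)%N -> lt_basis t l x -> lt_basis t k x.
Proof.
move=> /subnK <-; elim: (l - k)%N => [|d IH] //= H.
apply: IH; exact: lt_decr H.
Qed.

Lemma ev_seq (A : eqType) (s : seq A) (P : A -> nat -> Prop) :
  (forall a, a \in s -> exists N, forall m, (N <= m)%N -> P a m) ->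
  exists N, forall a, a \in s -> forall m, (N <= m)%N -> P a m.
Proof.
elim: s => [|a s IH] H; first by exists 0%N.
have [N1 H1] := H a (mem_head a s).
have [N2 H2] : exists N, forall b, b \in s -> forall m, (N <= m)%N -> P b m.
  by apply: IH => b bs; apply: H; rewrite inE bs orbT.
exists (maxn N1 N2) => b; rewrite inE => /orP [/eqP -> | bs] m Hm.
  by apply: H1; apply: leq_trans Hm; apply: leq_maxl.
by apply: H2 => //; apply: leq_trans Hm; apply: leq_maxr.
Qed.

Theorem proposition2p9
  (Bn : nat -> comPzRingType) (tn : forall n, lintop (Bn n))
  (p : forall m n, Bn m -> Bn n)
  (Hcompl : forall n, lt_complete (tn n))
  (Hp_hom : forall m n, (n <= m)%N -> is_rhom (p m n))
  (Hp_cont : forall m n, (n <= m)%N -> lt_continuous (tn m) (tn n) (p m n))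
  (Hp_surj : forall m n, (n <= m)%N -> forall y, exists x, p m n x = y)
  (Hp_id : forall n x, p n n x = x)
  (Hp_comp : forall m n l, (l <= n)%N -> (n <= m)%N ->
     forall x, p n l (p m n x) = p m l x)
  (* B = lim_n B_n with projections pr n *)
  (B : comPzRingType) (tB : lintop B) (pr : forall n, B -> Bn n)
  (Hpr_hom : forall n, is_rhom (pr n))
  (Hpr_compat : forall m n, (n <= m)%N -> forall x, p m n (pr m x) = pr n x)
  (Hpr_inj : forall x y, (forall n, pr n x = pr n y) -> x = y)
  (Hpr_surj : forall b : forall n, Bn n,
     (forall m n, (n <= m)%N -> p m n (b m) = b n) ->
     exists x, forall n, pr n x = b n)
  (* tB is the inverse limit topology: the pr n are continuous, and every
     basic open ideal of B contains a finite intersection of preimages of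
     open ideals of the B_n *)
  (HtB_cont : forall n, lt_continuous tB (tn n) (pr n))
  (HtB_coarse : forall l, exists s : seq (nat * nat),
     forall x, (forall nk, nk \in s -> lt_basis (tn nk.1) nk.2 (pr nk.1 x)) ->
       lt_basis tB l x)
  (* the exponentials e n *)
  (e : forall n, Bn n -> nat -> Bn n)
  (He : forall n, restricted_exp (tn n) (e n))
  (He_compat : forall m n, (n <= m)%N ->
     forall x i, e n (p m n x) i = p m n (e m x i)) :
  exists! E : B -> nat -> B,
    restricted_exp tB E /\ (forall n x i, e n (pr n x) i = pr n (E x i)).
Proof.
have Hex : forall x i, exists y, forall n, pr n y = e n (pr n x) i.
  move=> x i; apply: (Hpr_surj (fun n => e n (pr n x) i)) => m n Hnm.
  by rewrite -He_compat // Hpr_compat.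
pose E := fun x i => proj1_sig (constructive_indefinite_description _ (Hex x i)).
have HE : forall n x i, e n (pr n x) i = pr n (E x i).
  by move=> n x i; rewrite /E; case: constructive_indefinite_description.
exists E; split; last first.
  move=> E' [_ HE']; apply: functional_extensionality_dep => x.
  apply: functional_extensionality_dep => i; apply: Hpr_inj => n.
  by rewrite -HE HE'.
split=> //.
have pr0 := fun n => rh0 (Hpr_hom n).
split.
  move=> c k; have [s Hs] := HtB_coarse k.
  have [N HN] := ev_seq (P := fun nk m => lt_basis (tn nk.1) nk.2 (e nk.1 (pr nk.1 c) m)) (s := s)
     (fun nk _ => proj1 (He nk.1) (pr nk.1 c) nk.2).
  exists N => i Hi; apply: Hs => nk nks; rewrite -HE; exact: HN.
split.
  move=> c d i; apply: Hpr_inj => n.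
  by rewrite -HE !(rhB (Hpr_hom n)) -!HE; case: (He n) => _ [-> _].
split.
  move=> c d i; apply: Hpr_inj => n.
  rewrite -HE (rhM (Hpr_hom n)); case: (He n) => _ [_ [-> _]].
  rewrite /ps_mul (rhsum (Hpr_hom n)); apply: eq_bigr => j _.
  by rewrite (rhM (Hpr_hom n)) -!HE.
split.
  move=> i; apply: Hpr_inj => n.
  by rewrite -HE (rh1 (Hpr_hom n)) (rhnat (Hpr_hom n)); case: (He n) => _ [_ [_ [-> _]]].
split.
  move=> k; have [s Hs] := HtB_coarse k.
  have Hall : forall nk, nk \in s -> exists N, forall L, (N <= L)%N -> forall c, lt_basis tB L c ->
       forall i, lt_basis (tn nk.1) nk.2 (e nk.1 (pr nk.1 c) i).
    move=> [n kk] _ /=.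
    case: (He n) => _ [_ [_ [_ [Hc _]]]].
    have [l' Hl'] := Hc kk; have [l'' Hl''] := HtB_cont n l'.
    exists l'' => L HL c Hcb i; apply: Hl'; apply: Hl''; exact: lt_mono HL Hcb.
  have [N HN] := ev_seq Hall.
  exists N => c Hc i; apply: Hs => nk nks; rewrite -HE; exact: (HN nk nks N (leqnn N) c Hc i).
split.
  move=> c; apply: Hpr_inj => n; rewrite -HE.
  by case: (He n) => _ [_ [_ [_ [_ [-> _]]]]].
move=> c i j; apply: Hpr_inj => n.
rewrite -!HE; case: (He n) => _ [_ [_ [_ [_ [_ ->]]]]].
rewrite (rhsum (Hpr_hom n)); apply: eq_bigr => l _.
rewrite (rhM (Hpr_hom n)) -HE; congr (_ * _).
rewrite /binom2_coeff; case: ifP => _; [exact: (esym (rhnat (Hpr_hom n) _)) | exact: (esym (pr0 n))].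
Qed.
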